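(* For every $l\ge 9$, the graph $C_l\uplus Q(2,2,2)$ has a dispersed $4$-placement.
   Context: $H_1\uplus H_2$ denotes the vertex-disjoint union. $Q(n_1,\dots,n_t)$ ($1\le n_1\le\cdots\le n_t$) is the tree obtained from the star with centre $v$ and $t$ leaves by replacing each leaf with a path $P_{n_i}=v^i_1v^i_2\cdots v^i_{n_i}$, where $v$ is adjacent to $v^i_1$; so $Q(2,2,2)$ is the spider with three legs of length 2 (7 vertices). For a graph $H$ on $m$ vertices, a $k$-placement of $H$ is a $k$-tuple $(\phi_1,\dots,\phi_k)$ of bijections $\phi_i:V(H)\to V(K_m)$ with pairwise disjoint edge sets $\phi_i(E(H))$; it is dispersed if $\phi_i(v)\ne\phi_j(v)$ for every vertex $v$ and all $i\ne j$. *)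

(* Defs.v *)
From mathcomp Require Import all_boot all_order all_fingroup.
Set Implicit Arguments. Unset Strict Implicit. Unset Printing Implicit Defensive.

(* A (simple) graph H on m vertices is given by a symmetric adjacency
   relation on the vertex type 'I_m. *)

Definition cycle_graph (l : nat) : rel 'I_l :=
  fun u v => ((u.+1 %% l) == v) || ((v.+1 %% l) == u).

(* Spider Q(n_1,...,n_t): vertex 0 is the centre v; leg i occupies the
   consecutive vertices 1 + (n_1+...+n_{i-1}), ..., (n_1+...+n_i), listed
   as v^i_1, ..., v^i_{n_i}. *)
Definition leg_start (ns : seq nat) (k : nat) : bool :=
  has (fun i => k == (sumn (take i ns)).+1) (iota 0 (size ns)).

Definition spider_adj (ns : seq nat) (u v : nat) : bool :=
  ((u == 0) && leg_start ns v) || [&& v == u.+1, 0 < u & ~~ leg_start ns v].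

Definition spider (ns : seq nat) : rel 'I_(sumn ns).+1 :=
  fun u v => spider_adj ns u v || spider_adj ns v u.

Arguments cycle_graph : clear implicits.
Arguments spider : clear implicits.

Definition Q222 : rel 'I_7 := spider [:: 2; 2; 2].

Definition gunion (m1 m2 : nat) (e1 : rel 'I_m1) (e2 : rel 'I_m2)
  : rel 'I_(m1 + m2) :=
  fun x y => match split x, split y with
             | inl a, inl b => e1 a b
             | inr a, inr b => e2 a b
             | _, _ => false
             end.

Definition placement (m k : nat) (e : rel 'I_m) (phi : 'I_k -> {perm 'I_m}) : Prop :=
  forall i j : 'I_k, i != j ->
  forall u v x y : 'I_m, e u v -> e x y ->
    [set phi i u; phi i v] != [set phi j x; phi j y].

Definition dispersed (m k : nat) (phi : 'I_k -> {perm 'I_m}) : Prop :=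
  forall i j : 'I_k, i != j -> forall v : 'I_m, phi i v != phi j v.

(* Main.v *)
Require Import Defs.
From mathcomp Require Import all_boot all_order all_fingroup.
From mathcomp Require Import zify.
Set Implicit Arguments. Unset Strict Implicit. Unset Printing Implicit Defensive.

Definition cyc (j : nat) : nat := j + nth 0 [:: 4; 5; 1; 6] (j %% 4).
Definition stab (r l : nat) : seq nat :=
  match r with
  | 0 => [:: 0; 1; 5; 2; l+4; l+3; l+6]
  | 1 => [:: 0; 1; 5; 2; l+6; l+2; l+5]
  | 2 => [:: 0; 1; 5; 2; l+6; l+1; l+5]
  | _ => [:: 0; 1; l+4; 2; l+6; 5; l+5]
  end.
Definition spos (l k : nat) : nat := nth 0 (stab (l %% 4) l) k.
Definition G (l v : nat) : nat := if v < l then cyc v else spos l (v - l).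

Definition Edir (l a b : nat) : Prop :=
  (a + 1 < l /\ b = a + 1) \/ (a = l - 1 /\ b = 0) \/
  (a = l /\ b = l + 1) \/ (a = l /\ b = l + 3) \/ (a = l /\ b = l + 5) \/
  (a = l + 1 /\ b = l + 2) \/ (a = l + 3 /\ b = l + 4) \/ (a = l + 5 /\ b = l + 6).

Definition congr (l a b : nat) : Prop := a = b \/ a = b + (l + 7) \/ a + (l + 7) = b.

Lemma pathE a : (a %% 4 = 0 /\ cyc a = a + 4 /\ cyc (a + 1) = a + 6) \/
  (a %% 4 = 1 /\ cyc a = a + 5 /\ cyc (a + 1) = a + 2) \/
  (a %% 4 = 2 /\ cyc a = a + 1 /\ cyc (a + 1) = a + 7) \/
  (a %% 4 = 3 /\ cyc a = a + 6 /\ cyc (a + 1) = a + 5).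
Proof.
rewrite /cyc -(modnDml a 1).
have : a %% 4 < 4 by rewrite ltn_mod.
case E: (a %% 4) => [|[|[|[|//]]]] _ /=; rewrite ?E /=; lia.
Qed.

Lemma cycE a : (a %% 4 = 0 /\ cyc a = a + 4) \/ (a %% 4 = 1 /\ cyc a = a + 5) \/
  (a %% 4 = 2 /\ cyc a = a + 1) \/ (a %% 4 = 3 /\ cyc a = a + 6).
Proof. have := pathE a; lia. Qed.

Lemma G_cyc l a : a < l -> G l a = cyc a.
Proof. by rewrite /G => ->. Qed.
Lemma G_sp l k : G l (l + k) = spos l k.
Proof. by rewrite /G ltnNge leq_addr /= addKn. Qed.
Lemma G_l l : G l l = spos l 0.
Proof. by have := G_sp l 0; rewrite addn0. Qed.

Lemma cyc0 : cyc 0 = 4. Proof. by []. Qed.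

Lemma mod4 l : l %% 4 = 0 \/ l %% 4 = 1 \/ l %% 4 = 2 \/ l %% 4 = 3.
Proof. lia. Qed.


Lemma core l i j u v x y : 9 <= l -> i < 4 -> j < 4 -> i != j ->
  Edir l u v -> Edir l x y ->
  (congr l (G l u + i) (G l x + j) /\ congr l (G l v + i) (G l y + j)) \/
  (congr l (G l u + i) (G l y + j) /\ congr l (G l v + i) (G l x + j)) -> False.
Proof.
move=> hl hi hj /eqP hij Huv Hxy.
have Hl1 : l - 1 < l by lia.
rewrite /congr.
case: Huv => [[Ha ->]|[[-> ->]|[[-> ->]|[[-> ->]|[[-> ->]|[[-> ->]|[[-> ->]|[-> ->]]]]]]]];
case: Hxy => [[Hb ->]|[[-> ->]|[[-> ->]|[[-> ->]|[[-> ->]|[[-> ->]|[[-> ->]|[-> ->]]]]]]]];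
rewrite ?G_l ?G_sp ?G_cyc ?cyc0; try lia;
(match goal with |- context [spos] => rewrite /spos; case: (mod4 l) => [|[|[|]]] Hr; rewrite Hr /= | _ => idtac end);
(match goal with |- context [cyc (l - 1)] => have := cycE (l-1) | _ => idtac end);
  try (have := pathE u); try (have := pathE x); lia.
Qed.


Lemma sp_cases l k : k < 7 -> 9 <= l ->
  (l %% 4 = 0 /\ (k = 0 /\ spos l k = 0 \/ k = 1 /\ spos l k = 1 \/ k = 2 /\ spos l k = 5 \/ k = 3 /\ spos l k = 2 \/
     k = 4 /\ spos l k = l+4 \/ k = 5 /\ spos l k = l+3 \/ k = 6 /\ spos l k = l+6)) \/
  (l %% 4 = 1 /\ (k = 0 /\ spos l k = 0 \/ k = 1 /\ spos l k = 1 \/ k = 2 /\ spos l k = 5 \/ k = 3 /\ spos l k = 2 \/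
     k = 4 /\ spos l k = l+6 \/ k = 5 /\ spos l k = l+2 \/ k = 6 /\ spos l k = l+5)) \/
  (l %% 4 = 2 /\ (k = 0 /\ spos l k = 0 \/ k = 1 /\ spos l k = 1 \/ k = 2 /\ spos l k = 5 \/ k = 3 /\ spos l k = 2 \/
     k = 4 /\ spos l k = l+6 \/ k = 5 /\ spos l k = l+1 \/ k = 6 /\ spos l k = l+5)) \/
  (l %% 4 = 3 /\ (k = 0 /\ spos l k = 0 \/ k = 1 /\ spos l k = 1 \/ k = 2 /\ spos l k = l+4 \/ k = 3 /\ spos l k = 2 \/
     k = 4 /\ spos l k = l+6 \/ k = 5 /\ spos l k = 5 \/ k = 6 /\ spos l k = l+5)).
Proof.
move=> hk hl; rewrite /spos.
case: (mod4 l) => [|[|[|]]] Hr; rewrite Hr;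
move: hk; case: k => [|[|[|[|[|[|[|//]]]]]]] _ /=; lia.
Qed.

Lemma G_lt l v : 9 <= l -> v < l + 7 -> G l v < l + 7.
Proof.
move=> hl hv; case: (ltnP v l) => h.
  by rewrite G_cyc //; have := cycE v; lia.
have -> : v = l + (v - l) by lia.
rewrite G_sp; have := sp_cases (_ : v - l < 7) hl; lia.
Qed.

Lemma G_inj l v w : 9 <= l -> v < l + 7 -> w < l + 7 -> G l v = G l w -> v = w.
Proof.
move=> hl hv hw.
case: (ltnP v l) => h1; case: (ltnP w l) => h2.
- rewrite !G_cyc //; have := cycE v; have := cycE w; lia.
- rewrite G_cyc //; have -> : w = l + (w - l) by lia.
  rewrite G_sp; have := sp_cases (_ : w - l < 7) hl; have := cycE v; lia.
- rewrite (G_cyc h2); have -> : v = l + (v - l) by lia.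
  rewrite G_sp; have := sp_cases (_ : v - l < 7) hl; have := cycE w; lia.
- have -> : v = l + (v - l) by lia. have -> : w = l + (w - l) by lia.
  rewrite !G_sp; have := sp_cases (_ : v - l < 7) hl; have := sp_cases (_ : w - l < 7) hl; lia.
Qed.

Definition F (l i v : nat) : nat :=
  if G l v + i < l + 7 then G l v + i else G l v + i - (l + 7).

Lemma F_lt l i v : 9 <= l -> i < 4 -> v < l + 7 -> F l i v < l + 7.
Proof. move=> hl hi hv; have := G_lt hl hv; rewrite /F; case: ifP; lia. Qed.

Lemma F_congr l i j a b : F l i a = F l j b -> congr l (G l a + i) (G l b + j).
Proof. rewrite /F /congr; case: ifP; case: ifP; lia. Qed.

Definition phif (l : nat) (hl : 9 <= l) (i : 'I_4) (v : 'I_(l + 7)) : 'I_(l + 7) :=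
  Ordinal (F_lt hl (ltn_ord i) (ltn_ord v)).
Lemma phif_inj l (hl : 9 <= l) i : injective (phif hl i).
Proof.
move=> v w /(congr1 val) /= /F_congr H.
apply/val_inj/(G_inj hl (ltn_ord v) (ltn_ord w)); rewrite /congr in H.
have := G_lt hl (ltn_ord v); have := G_lt hl (ltn_ord w); have := ltn_ord i; lia.
Qed.
Definition phi l (hl : 9 <= l) (i : 'I_4) : {perm 'I_(l + 7)} := perm (@phif_inj l hl i).

Lemma set2_eq (T : finType) (a b c d : T) :
  [set a; b] = [set c; d] -> (a = c /\ b = d) \/ (a = d /\ b = c).
Proof.
move=> E.
have ha : a \in [set c; d] by rewrite -E !inE eqxx.
have hb : b \in [set c; d] by rewrite -E !inE eqxx orbT.
have hc : c \in [set a; b] by rewrite E !inE eqxx.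
have hd : d \in [set a; b] by rewrite E !inE eqxx orbT.
case/set2P: ha => ha; case/set2P: hb => hb; case/set2P: hc => hc; case/set2P: hd => hd;
  subst; tauto.
Qed.

Definition Sdir (a b : nat) : bool :=
  [|| (a == 0) && (b == 1), (a == 0) && (b == 3), (a == 0) && (b == 5),
      (a == 1) && (b == 2), (a == 3) && (b == 4) | (a == 5) && (b == 6)].

Lemma Q222n (a b : nat) : a < 7 -> b < 7 ->
  spider_adj [:: 2; 2; 2] a b || spider_adj [:: 2; 2; 2] b a -> Sdir a b || Sdir b a.
Proof.
case: a => [|[|[|[|[|[|[|//]]]]]]] _; case: b => [|[|[|[|[|[|[|//]]]]]]] _; vm_compute; congruence.
Qed.

Ltac pickE := rewrite /Edir; repeat (first [by left; split; lia | right]); split; lia.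
Ltac pickE2 := first [by left; pickE | by right; pickE].
Ltac solveS H := first [ case/andP: H => /eqP ? /eqP ?; pickE2 | case/orP: H => H; solveS H ].

Lemma edgeE l (u v : 'I_(l + 7)) : 9 <= l ->
  gunion (cycle_graph l) Q222 u v -> Edir l u v \/ Edir l v u.
Proof.
move=> hl; rewrite /gunion.
case: splitP => a Ha; case: splitP => b Hb //.
- have ha := ltn_ord a; have hb := ltn_ord b.
  rewrite /cycle_graph => /orP[] /eqP H.
  + case: (ltnP a.+1 l) => h.
    * rewrite modn_small // in H. pickE2.
    * have e : a.+1 = l by lia. rewrite e modnn in H. pickE2.
  + case: (ltnP b.+1 l) => h.
    * rewrite modn_small // in H. pickE2.
    * have e : b.+1 = l by lia. rewrite e modnn in H. pickE2.
- move=> H; have := Q222n (ltn_ord a) (ltn_ord b) H; rewrite /Sdir.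
  move=> /orP [] H'; solveS H'.
Qed.

Theorem lemma2p7 (l : nat) (hl : 9 <= l) :
  exists phi : 'I_4 -> {perm 'I_(l + 7)},
    placement (gunion (cycle_graph l) Q222) phi /\ dispersed phi.
Proof.
exists (phi hl); split.
- move=> i j hij u v x y huv hxy; apply/eqP => /set2_eq; rewrite !permE.
  move=> H.
  have Hij : val i != val j by [].
  have := edgeE hl huv; have := edgeE hl hxy.
  have hi := ltn_ord i; have hj := ltn_ord j.
  case: H => [[/(congr1 val) /F_congr h1 /(congr1 val) /F_congr h2]|
              [/(congr1 val) /F_congr h1 /(congr1 val) /F_congr h2]];
  (case=> Exy; case=> Euv;
   [ apply: (core hl hi hj Hij Euv Exy) | apply: (core hl hi hj Hij Euv Exy)
   | apply: (core hl hi hj Hij Euv Exy) | apply: (core hl hi hj Hij Euv Exy)]; tauto).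
- move=> i j hij v; apply/eqP => /(congr1 val); rewrite !permE /= /F.
  have := G_lt hl (ltn_ord v); have := ltn_ord i; have := ltn_ord j.
  have : nat_of_ord i != nat_of_ord j by []. case: ifP; case: ifP; lia.
Qed.
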